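(* Let $C_{\min}=\min_l C_l$, and run Algorithm 3 (see context) on an arbitrary sequence of packet arrivals. Then: (i) the resulting $\{X_{mk}\}$ is feasible for $\textbf{Schedule}$, i.e. capacities $C_l$ are never exceeded; (ii) the resulting $\{\alpha_m\},\{\beta_{lt}\}$ (final values) are feasible for $\textbf{Dual}$; (iii) there is a constant $B<\infty$, depending on $L$ but not on $C_{\min}$, such that $$\Gamma_{opt}\le\Big(2(1+\ln L)+\frac{B}{C_{\min}}\Big)\sum_{m,k}X_{mk}.$$ Consequently, Algorithm 3 is $(1,\,2(1+\ln L))$-competitive in the limit $C_{\min}\to\infty$.
   Context: Network model. The network is a directed graph with a finite set $\mathcal L$ of links. Each link $l$ has an integer capacity $C_l\ge1$ (packets per time slot). Time is slotted, $t=1,2,\dots$. $\mathcal M$ is a finite set of packets. Packet $m$ has a source node $s_m$, a destination node $\mathrm{dst}_m$, an arrival slot $a_m$ and a deadline slot $f_m$. Valid schedules. A valid schedule for $m$ is a set $k=\{(l_1,t_1),\dots,(l_j,t_j)\}$ of (link, slot) pairs satisfying two conditions: $l_1,\dots,l_j$ form a directed path from $s_m$ to $\mathrm{dst}_m$, and $a_m\le t_1<t_2<\dots<t_j\le f_m$. $V(m)$ denotes the set of valid schedules of $m$. $L\ge1$ is an integer with $|k|\le L$ for all $m\in\mathcal M$, $k\in V(m)$. $\textbf{Schedule}(R)$ is the LP: maximize $\sum_{m,k\in V(m)}X_{mk}$ subject to three constraints: - $\sum_{k\in V(m)}X_{mk}\le1$ for all $m$; - $\sum_{m,k:(l,t)\in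 k}X_{mk}\le RC_l$ for all $l,t$; - $X_{mk}\ge0$. $\textbf{Schedule}$ is $\textbf{Schedule}(1)$, and $\Gamma_{opt}$ denotes its optimal value. $\textbf{Dual}$ is the LP: minimize $\sum_m\alpha_m+\sum_{l,t}C_l\beta_{lt}$ subject to three constraints: - $\alpha_m+\sum_{(l,t)\in k}\beta_{lt}\ge1$ for all $m$ and $k\in V(m)$; - $\alpha_m\ge0$; - $\beta_{lt}\ge0$. Competitive ratio. An online policy $\eta$ is $(R,\rho)$-competitive if $\Gamma_{opt}/\Gamma_\eta(R)\le\rho$ for every arrival sequence, where $\Gamma_\eta(R)$ is the number of packets $\eta$ delivers with capacities $RC_l$. Define the function $$g_L(x)=\begin{cases}\dfrac{e^{x}-1}{L\,(e^{1/(\ln L+1)}-1)}, & 0\le x\le \frac{1}{\ln L+1},\\[2mm] e^{(x-1)(\ln L+1)}, & x\ge\frac{1}{\ln L+1}.\end{cases}$$ Algorithm 3. 1. Initialize all $\alpha_m,X_{mk}$ to $0$. For each link $l$ and slot $t$, let $n_{lt}$ be the number of packets scheduled so far on $(l,t)$ (initially $0$), and maintain $\beta_{lt}=g_L(n_{lt}/C_l)$ (initially $0$). 2. For each arriving packet $m$ in order: - Let $k^*\in\arg\max_{k\in V(m)}\big(1-\sum_{(l,t)\in k}\beta_{lt}\big)$. - If $1-\sum_{(l,t)\in k^*}\beta_{lt}>0$, do the following. Set $\alpha_m=1-\sum_{(l,t)\in k^*}\beta_{lt}$, using current values. For each $(l,t)\in k^*$ increment $n_{lt}$ by one and reset $\beta_{lt}=g_L(n_{lt}/C_l)$.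 Set $X_{mk^*}=1$, and transmit $m$ along $k^*$. - Otherwise, drop $m$. *)

(* Defs.v *)
From Stdlib Require Import Reals Lra Lia List Bool.
Import ListNotations.
Open Scope R_scope.

(** Links are indexed 0 .. nL-1; link l goes from node [ltail l] to node
    [lhead l] and has integer capacity [cap l] (packets per slot).
    Nodes are natural numbers. *)
Record network := Network {
  nL : nat;
  ltail : nat -> nat;
  lhead : nat -> nat;
  cap : nat -> nat
}.

(** Packets are indexed 0 .. nM-1, in the order in which they arrive
    (and are processed by the online algorithm). *)
Record packets := Packets {
  nM : nat;
  src : nat -> nat;
  dst : nat -> nat;
  arr : nat -> nat;
  dl  : nat -> nat
}.

(** A schedule is the list [(l_1,t_1); ...; (l_j,t_j)] of (link, slot) pairs,
    listed in path order (equivalently, in increasing slot order). *)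
Definition sched := list (nat * nat).

Fixpoint is_walk (N : network) (s d : nat) (ls : list nat) : Prop :=
  match ls with
  | [] => s = d
  | l :: r => (l < nL N)%nat /\ ltail N l = s /\ is_walk N (lhead N l) d r
  end.

Definition is_path (N : network) (s d : nat) (ls : list nat) : Prop :=
  is_walk N s d ls /\ NoDup (s :: map (lhead N) ls).

Fixpoint times_ok (lo hi : nat) (ts : list nat) : Prop :=
  match ts with
  | [] => True
  | t :: r => (lo <= t <= hi)%nat /\ times_ok (S t) hi r
  end.

Definition valid_sched (N : network) (P : packets) (m : nat) (k : sched) : Prop :=
  is_path N (src P m) (dst P m) (map fst k) /\
  times_ok (arr P m) (dl P m) (map snd k).

Definition memlt (l t : nat) (k : sched) : bool :=
  existsb (fun p => andb (Nat.eqb (fst p) l) (Nat.eqb (snd p) t)) k.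

(** A (finitely supported) solution X is a list of entries ((m,k), X_mk);
    absent pairs have X_mk = 0. *)
Definition lpsol := list ((nat * sched) * R).

Definition sumR (xs : list R) : R := fold_right Rplus 0 xs.

Definition objective (X : lpsol) : R := sumR (map snd X).

Definition schedule_feasible (N : network) (P : packets) (Rf : R) (X : lpsol) : Prop :=
  NoDup (map fst X) /\
  (forall e, In e X ->
     (fst (fst e) < nM P)%nat /\ valid_sched N P (fst (fst e)) (snd (fst e)) /\ 0 <= snd e) /\
  (forall m, (m < nM P)%nat ->
     sumR (map snd (filter (fun e => Nat.eqb (fst (fst e)) m) X)) <= 1) /\
  (forall l t, (l < nL N)%nat ->
     sumR (map snd (filter (fun e => memlt l t (snd (fst e))) X)) <= Rf * INR (cap N l)).

Definition sum_beta (beta : nat -> nat -> R) (k : sched) : R :=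
  sumR (map (fun p => beta (fst p) (snd p)) k).

Definition dual_feasible (N : network) (P : packets)
    (alpha : nat -> R) (beta : nat -> nat -> R) : Prop :=
  (forall m k, (m < nM P)%nat -> valid_sched N P m k -> alpha m + sum_beta beta k >= 1) /\
  (forall m, (m < nM P)%nat -> alpha m >= 0) /\
  (forall l t, (l < nL N)%nat -> beta l t >= 0).

Definition gL (L : nat) (x : R) : R :=
  let th := 1 / (ln (INR L) + 1) in
  if Rle_dec x th then (exp x - 1) / (INR L * (exp th - 1))
  else exp ((x - 1) * (ln (INR L) + 1)).

Definition beta_of (L : nat) (N : network) (n : nat -> nat -> nat) (l t : nat) : R :=
  gL L (INR (n l t) / INR (cap N l)).

Definition update (n : nat -> nat -> nat) (d : option sched) : nat -> nat -> nat :=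
  match d with
  | None => n
  | Some k => fun l t => (n l t + if memlt l t k then 1 else 0)%nat
  end.

(** decisions: [dec m = Some k] means packet m is transmitted along k,
    [None] means it is dropped.  [counts dec m] = the counts n_{lt} just
    before packet m is processed. *)
Fixpoint counts (dec : nat -> option sched) (m : nat) : nat -> nat -> nat :=
  match m with
  | O => fun _ _ => O
  | S m' => update (counts dec m') (dec m')
  end.

(** [dec] is a possible execution of Algorithm 3 (any tie-breaking in the argmax). *)
Definition alg3_run (L : nat) (N : network) (P : packets) (dec : nat -> option sched) : Prop :=
  forall m, (m < nM P)%nat ->
    let b := beta_of L N (counts dec m) in
    match dec m with
    | Some k =>
        valid_sched N P m k /\
        (forall k', valid_sched N P m k' -> 1 - sum_beta b k' <= 1 - sum_beta b k) /\
        0 < 1 - sum_beta b k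
    | None =>
        forall k', valid_sched N P m k' -> 1 - sum_beta b k' <= 0
    end.

Definition alg_alpha (L : nat) (N : network) (dec : nat -> option sched) (m : nat) : R :=
  match dec m with
  | Some k => 1 - sum_beta (beta_of L N (counts dec m)) k
  | None => 0
  end.

Definition alg_beta (L : nat) (N : network) (P : packets) (dec : nat -> option sched) :
  nat -> nat -> R := beta_of L N (counts dec (nM P)).

Fixpoint alg_X_upto (dec : nat -> option sched) (m : nat) : lpsol :=
  match m with
  | O => []
  | S m' => alg_X_upto dec m' ++
            match dec m' with Some k => [((m', k), 1)] | None => [] end
  end.

Definition alg_X (P : packets) (dec : nat -> option sched) : lpsol :=
  alg_X_upto dec (nM P).

(** C_min = min_l C_l (for nL >= 1) *)
Definition Cmin (N : network) : nat :=
  fold_right Nat.min (cap N 0) (map (cap N) (seq 0 (nL N))).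

(* Main.v *)
Require Import Defs.
From Stdlib Require Import Reals List Lra Lia Bool Arith.
Import ListNotations.
Open Scope R_scope.

Lemma exp_le x y : x <= y -> exp x <= exp y.
Proof. intros [H|H]; [left; apply exp_increasing; auto| subst; lra]. Qed.

Definition KK (L : nat) := ln (INR L) + 1.
Definition th (L : nat) := 1 / KK L.
Definition AA (L : nat) := 1 / (INR L * (exp (th L) - 1)).

Section G.
Variable L : nat.
Hypothesis hL : (1 <= L)%nat.

Lemma INRL_ge1 : 1 <= INR L.
Proof. apply (le_INR 1). auto. Qed.

Lemma lnL_ge0 : 0 <= ln (INR L).
Proof. destruct (Req_dec (INR L) 1) as [e|ne]. rewrite e, ln_1; lra.
  left. rewrite <- ln_1. apply ln_increasing; lra || (pose proof INRL_ge1; lra). Qed.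

Lemma K_ge1 : 1 <= KK L.
Proof. unfold KK. pose proof lnL_ge0. lra. Qed.

Lemma th_pos : 0 < th L.
Proof. unfold th. pose proof K_ge1. apply Rdiv_lt_0_compat; lra. Qed.

Lemma th_le1 : th L <= 1.
Proof. unfold th. pose proof K_ge1. apply Rmult_le_reg_r with (KK L). lra.
  field_simplify; lra. Qed.

Lemma eth_pos : 0 < exp (th L) - 1.
Proof. pose proof (exp_ineq1 (th L)). pose proof th_pos. 
  assert (th L <> 0) by lra. specialize (H H1). lra. Qed.

Lemma A_pos : 0 < AA L.
Proof. unfold AA. pose proof eth_pos. pose proof INRL_ge1.
  apply Rdiv_lt_0_compat. lra. apply Rmult_lt_0_compat; lra. Qed.

Lemma gL_1 x : x <= th L -> gL L x = (exp x - 1) * AA L.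
Proof. intro h. unfold gL. fold (KK L). fold (th L).
  destruct (Rle_dec x (th L)); [|lra]. unfold AA. pose proof eth_pos. pose proof INRL_ge1. field. lra. Qed.

Lemma gL_2 x : th L <= x -> gL L x = exp ((x - 1) * KK L).
Proof. intro h. unfold gL. fold (KK L). fold (th L).
  destruct (Rle_dec x (th L)); [|reflexivity].
  assert (x = th L) by lra. subst x. pose proof eth_pos. pose proof INRL_ge1. pose proof K_ge1.
  replace ((th L - 1) * KK L) with (- ln (INR L)).
  rewrite exp_Ropp, exp_ln by lra. field. lra.
  unfold th, KK. field. unfold KK in H1. lra. Qed.
End G.
Section G.
Variable L : nat.
Hypothesis hL : (1 <= L)%nat.

Lemma g0 : gL L 0 = 0.
Proof. rewrite gL_1; auto. rewrite exp_0; ring. pose proof (th_pos L hL); lra. Qed.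

Lemma g_mono x y : x <= y -> gL L x <= gL L y.
Proof. intro h. pose proof (A_pos L hL). pose proof (K_ge1 L hL).
  destruct (Rle_dec y (th L)).
  - rewrite !gL_1 by (auto; lra). apply Rmult_le_compat_r; [lra|]. pose proof (exp_le _ _ h); lra.
  - destruct (Rle_dec x (th L)).
    + apply Rle_trans with (gL L (th L)).
      * rewrite !gL_1 by (auto; lra). apply Rmult_le_compat_r; [lra|]. pose proof (exp_le _ _ r); lra.
      * rewrite !gL_2 by (auto; lra). apply exp_le. apply Rmult_le_compat_r; lra.
    + rewrite !gL_2 by (auto; lra). apply exp_le. apply Rmult_le_compat_r; lra.
Qed.

Lemma g_nonneg x : 0 <= x -> 0 <= gL L x.
Proof. intro. rewrite <- g0. apply g_mono; auto. Qed.

Lemma g_ge1 x : 1 <= x -> 1 <= gL L x.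
Proof. intro. pose proof (th_le1 L hL). pose proof (K_ge1 L hL). rewrite gL_2; [|auto|lra].
  apply Rle_trans with (exp 0); [rewrite exp_0; lra|]. apply exp_le. apply Rmult_le_pos; lra. Qed.

Lemma bern K d : 1 <= K -> 0 <= d -> K * exp d <= exp (K * d) + K - 1.
Proof. intros hK hd.
  pose proof (exp_ineq1_le ((K - 1) * d)) as e1.
  pose proof (exp_ineq1_le (- d)) as e2.
  assert (E1 : exp (K * d) = exp d * exp ((K-1)*d)) by (rewrite <- exp_plus; f_equal; ring).
  assert (E2 : 1 = exp d * exp (- d)) by (rewrite <- exp_plus, <- exp_0; f_equal; ring).
  pose proof (exp_pos d).
  assert (exp d * (1 + (K - 1) * d) <= exp (K * d)) by (rewrite E1; apply Rmult_le_compat_l; lra).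
  assert (exp d * (1 + - d) <= 1) by (rewrite E2 at 2; apply Rmult_le_compat_l; lra).
  assert ((K - 1) * (exp d * (1 + - d)) <= (K-1) * 1) by (apply Rmult_le_compat_l; lra).
  nra.
Qed.

Lemma grow11 x y : 0 <= x -> x <= y -> y <= th L ->
  gL L y + AA L / KK L <= (gL L x + AA L / KK L) * exp (KK L * (y - x)).
Proof. intros h0 h1 h2. pose proof (A_pos L hL). pose proof (K_ge1 L hL).
  rewrite !gL_1 by (auto; lra).
  set (d := y - x). replace y with (x + d) by (unfold d; ring). rewrite exp_plus.
  assert (u1 : 1 <= exp x) by (rewrite <- exp_0; apply exp_le; lra).
  assert (v1 : 1 <= exp d) by (rewrite <- exp_0; apply exp_le; unfold d; lra).
  assert (w1 : KK L * exp d <= exp (KK L * d) + KK L - 1) by (apply bern; unfold d; lra).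
  set (u := exp x) in *. set (v := exp d) in *. set (w := exp (KK L * d)) in *.
  set (K := KK L) in *. set (A := AA L) in *. 
  set (c := 1 / K).
  assert (ik : 0 < c <= 1). { unfold c. split. apply Rdiv_lt_0_compat; lra.
    apply Rmult_le_reg_r with K. lra. field_simplify; lra. }
  assert (Kc : K * c = 1) by (unfold c; field; lra).
  replace ((u * v - 1) * A + A / K) with (A * (u*v - 1 + c)) by (unfold c; field; lra).
  replace (((u - 1) * A + A / K) * w) with (A * ((u - 1 + c) * w)) by (unfold c; field; lra).
  apply Rmult_le_compat_l. lra.
  clearbody u v w K A d c.
  assert (wv : (K - 1) * (v - 1) <= w - v) by lra.
  assert (c * (w - v) <= (u - 1 + c) * (w - v)) by (apply Rmult_le_compat_r; nra).
  assert (c * ((K - 1) * (v - 1)) <= c * (w - v)) by (apply Rmult_le_compat_l; lra).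
  nra.
Qed.

Lemma grow22 x y : th L <= x -> x <= y ->
  gL L y + AA L / KK L <= (gL L x + AA L / KK L) * exp (KK L * (y - x)).
Proof. intros h1 h2. pose proof (A_pos L hL). pose proof (K_ge1 L hL).
  rewrite !gL_2 by (auto; lra).
  replace ((y - 1) * KK L) with ((x-1) * KK L + KK L * (y - x)) by ring. rewrite exp_plus.
  assert (1 <= exp (KK L * (y - x))) by (rewrite <- exp_0; apply exp_le; nra).
  assert (0 <= AA L / KK L) by (unfold Rdiv; apply Rmult_le_pos; [lra|left; apply Rinv_0_lt_compat; lra]).
  pose proof (exp_pos ((x - 1) * KK L)). nra.
Qed.

Lemma grow x y : 0 <= x -> x <= y ->
  gL L y + AA L / KK L <= (gL L x + AA L / KK L) * exp (KK L * (y - x)).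
Proof. intros h0 h1.
  destruct (Rle_dec y (th L)). apply grow11; auto.
  destruct (Rle_dec x (th L)).
  - eapply Rle_trans. apply (grow22 (th L) y); lra.
    pose proof (grow11 x (th L) h0 r ltac:(lra)).
    replace (KK L * (y - x)) with (KK L * (th L - x) + KK L * (y - th L)) by ring.
    rewrite exp_plus, <- Rmult_assoc. apply Rmult_le_compat_r. left; apply exp_pos. auto.
  - apply grow22; lra.
Qed.
End G.

Definition EE (L : nat) := KK L ^ 2 * exp (KK L).

Lemma exp_quad s : 0 <= s -> exp s - 1 <= s + s ^ 2 * exp s.
Proof. intro hs. pose proof (exp_ineq1_le (- s)).
  assert (E : exp s * exp (- s) = 1) by (rewrite <- exp_plus, <- exp_0; f_equal; ring).
  pose proof (exp_pos s).
  assert (exp s * (1 + - s) <= exp s * exp (-s)) by (apply Rmult_le_compat_l; lra).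
  assert (h1 : exp s - 1 <= s * exp s) by nra.
  assert (s * (exp s - 1) <= s * (s * exp s)) by (apply Rmult_le_compat_l; lra).
  nra.
Qed.

Section G.
Variable L : nat.
Hypothesis hL : (1 <= L)%nat.

Lemma CexpK (C Cm : nat) : (1 <= Cm)%nat -> (Cm <= C)%nat ->
  INR C * (exp (KK L * (1 / INR C)) - 1) <= KK L + EE L / INR Cm.
Proof. intros h1 h2. pose proof (K_ge1 L hL).
  assert (hCm : 1 <= INR Cm) by (apply (le_INR 1); auto).
  assert (hC : INR Cm <= INR C) by (apply le_INR; auto).
  set (s := KK L * (1 / INR C)).
  assert (s0 : 0 <= s) by (unfold s; apply Rmult_le_pos; [lra| unfold Rdiv; rewrite Rmult_1_l; left; apply Rinv_0_lt_compat; lra]).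
  assert (sK : s <= KK L). { unfold s. rewrite <- (Rmult_1_r (KK L)) at 2. apply Rmult_le_compat_l. lra.
     apply Rmult_le_reg_r with (INR C). lra. field_simplify; lra. }
  pose proof (exp_quad s s0).
  assert (INR C * (exp s - 1) <= INR C * (s + s^2 * exp s)) by (apply Rmult_le_compat_l; lra).
  assert (e1 : INR C * (s + s^2 * exp s) = KK L + KK L ^ 2 * exp s / INR C) by (unfold s; field; lra).
  assert (exp s <= exp (KK L)) by (apply exp_le; auto).
  assert (KK L ^ 2 * exp s / INR C <= EE L / INR Cm).
  { unfold EE, Rdiv. apply Rmult_le_compat. 
    - apply Rmult_le_pos. apply pow_le; lra. left; apply exp_pos.
    - left; apply Rinv_0_lt_compat; lra.
    - apply Rmult_le_compat_l. apply pow_le; lra. auto.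
    - apply Rinv_le_contravar; lra. }
  lra.
Qed.

Lemma delta_bound (n C Cm : nat) : (1 <= Cm)%nat -> (Cm <= C)%nat ->
  INR C * (gL L (INR (S n) / INR C) - gL L (INR n / INR C))
  <= (KK L + EE L / INR Cm) * (gL L (INR n / INR C) + AA L / KK L).
Proof. intros h1 h2.
  assert (hC : 1 <= INR C) by (apply (le_INR 1); lia).
  assert (x0 : 0 <= INR n / INR C) by (unfold Rdiv; apply Rmult_le_pos; [apply pos_INR| left; apply Rinv_0_lt_compat; lra]).
  assert (xy : INR (S n) / INR C - INR n / INR C = 1 / INR C) by (rewrite S_INR; field; lra).
  pose proof (grow L hL (INR n / INR C) (INR (S n) / INR C) x0 ltac:(assert (0 <= 1 / INR C) by (unfold Rdiv; rewrite Rmult_1_l; left; apply Rinv_0_lt_compat; lra); lra)) as G.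
  rewrite xy in G.
  pose proof (CexpK C Cm h1 h2) as Ce.
  pose proof (A_pos L hL). pose proof (K_ge1 L hL).
  assert (0 <= gL L (INR n / INR C) + AA L / KK L).
  { pose proof (g_nonneg L hL _ x0). assert (0 <= AA L / KK L) by (unfold Rdiv; apply Rmult_le_pos; [lra|left; apply Rinv_0_lt_compat; lra]). lra. }
  set (gx := gL L (INR n / INR C)) in *. set (gy := gL L (INR (S n) / INR C)) in *.
  set (q := gx + AA L / KK L) in *. 
  assert (gy - gx <= q * (exp (KK L * (1 / INR C)) - 1)) by (unfold q in *; nra).
  assert (INR C * (gy - gx) <= INR C * (q * (exp (KK L * (1 / INR C)) - 1))) by (apply Rmult_le_compat_l; lra).
  assert (INR C * (exp (KK L * (1 / INR C)) - 1) * q <= (KK L + EE L / INR Cm) * q) by (apply Rmult_le_compat_r; lra).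
  nra.
Qed.

Lemma LA_le1 : INR L * (AA L / KK L) <= 1.
Proof. pose proof (eth_pos L hL). pose proof (K_ge1 L hL). pose proof (INRL_ge1 L hL).
  pose proof (exp_ineq1_le (th L)). 
  unfold AA. replace (INR L * (1 / (INR L * (exp (th L) - 1)) / KK L)) with (1 / (KK L * (exp (th L) - 1))) by (field; lra).
  assert (KK L * th L = 1) by (unfold th; field; lra).
  apply Rmult_le_reg_r with (KK L * (exp (th L) - 1)). nra. field_simplify; nra.
Qed.
End G.

Lemma sumR_app a b : sumR (a ++ b) = sumR a + sumR b.
Proof. induction a; simpl; [ring| rewrite IHa; ring]. Qed.

Lemma sumR_le {A} (f g : A -> R) l : (forall x, In x l -> f x <= g x) ->
  sumR (map f l) <= sumR (map g l).
Proof. induction l; simpl; intros H; [lra|].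
  pose proof (H a (or_introl eq_refl)). assert (sumR (map f l) <= sumR (map g l)) by (apply IHl; auto). lra. Qed.

Lemma sumR_ext {A} (f g : A -> R) l : (forall x, In x l -> f x = g x) ->
  sumR (map f l) = sumR (map g l).
Proof. intro H. f_equal. apply map_ext_in. auto. Qed.

Lemma sumR_plus {A} (f g : A -> R) l :
  sumR (map (fun x => f x + g x) l) = sumR (map f l) + sumR (map g l).
Proof. induction l; simpl; [ring| rewrite IHl; ring]. Qed.

Lemma sumR_scal {A} c (f : A -> R) l :
  sumR (map (fun x => c * f x) l) = c * sumR (map f l).
Proof. induction l; simpl; [ring| rewrite IHl; ring]. Qed.

Lemma sumR_scalr {A} c (f : A -> R) l :
  sumR (map (fun x => f x * c) l) = sumR (map f l) * c.
Proof. induction l; simpl; [ring| rewrite IHl; ring]. Qed.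

Lemma sumR_zero {A} (f : A -> R) l : (forall x, In x l -> f x = 0) -> sumR (map f l) = 0.
Proof. induction l; simpl; intros H; [lra|]. rewrite H, IHl; auto. ring. Qed.

Lemma sumR_nonneg {A} (f : A -> R) l : (forall x, In x l -> 0 <= f x) -> 0 <= sumR (map f l).
Proof. induction l; simpl; intros H; [lra|].
  pose proof (H a (or_introl eq_refl)). assert (0 <= sumR (map f l)) by (apply IHl; auto). lra. Qed.

Lemma sumR_swap {A B} (f : A -> B -> R) la lb :
  sumR (map (fun a => sumR (map (fun b => f a b) lb)) la) =
  sumR (map (fun b => sumR (map (fun a => f a b) la)) lb).
Proof. induction la; simpl.
  - symmetry; apply sumR_zero; auto.
  - rewrite IHla. rewrite <- sumR_plus. reflexivity. Qed.

Lemma sumR_filter {A} (p : A -> bool) (f : A -> R) l :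
  sumR (map f (filter p l)) = sumR (map (fun e => if p e then f e else 0) l).
Proof. induction l; simpl; auto. destruct (p a); simpl; rewrite IHl; ring. Qed.

Lemma sumR_elem {A} (f : A -> R) l x : (forall y, In y l -> 0 <= f y) -> In x l -> f x <= sumR (map f l).
Proof. induction l; simpl; intros H Hi; [contradiction|].
  destruct Hi as [<-|Hi].
  - assert (0 <= sumR (map f l)) by (apply sumR_nonneg; auto). lra.
  - pose proof (H a (or_introl eq_refl)). assert (f x <= sumR (map f l)) by (apply IHl; auto). lra. Qed.

Lemma sumR_ind_seq (c : nat -> R) k a n : (a <= k < a + n)%nat ->
  sumR (map (fun j => if Nat.eqb k j then c j else 0) (seq a n)) = c k.
Proof. revert a. induction n; intros a h; [lia|]. simpl.
  destruct (Nat.eqb_spec k a).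
  - subst. rewrite sumR_zero. ring. intros x Hx. apply in_seq in Hx.
    destruct (Nat.eqb_spec a x); [lia|auto].
  - rewrite IHn by lia. ring. Qed.

Lemma sumR_const_bound {A} (f : A -> R) l c : (forall x, In x l -> f x <= c) ->
  sumR (map f l) <= INR (length l) * c.
Proof. induction l; cbn -[INR]; intros H; [simpl; lra|].
  pose proof (H a (or_introl eq_refl)). assert (sumR (map f l) <= INR (length l) * c) by (apply IHl; auto).
  rewrite S_INR. unfold sumR in *. simpl. lra. Qed.

Lemma sumR_cons x l : sumR (x :: l) = x + sumR l.
Proof. reflexivity. Qed.

Definition peq (p q : nat * nat) : bool := Nat.eqb (fst p) (fst q) && Nat.eqb (snd p) (snd q).
Lemma peq_spec p q : peq p q = true <-> p = q.
Proof. destruct p, q; unfold peq; simpl. rewrite andb_true_iff, !Nat.eqb_eq. split.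
  intros [-> ->]; auto. intro H; inversion H; auto. Qed.

Lemma memlt_In l t k : memlt l t k = true <-> In (l, t) k.
Proof. unfold memlt. rewrite existsb_exists. split.
  - intros [[a b] [Hi He]]. simpl in He. apply andb_true_iff in He as [E1 E2].
    apply Nat.eqb_eq in E1, E2. subst; auto.
  - intro H. exists (l, t). split; auto. simpl. rewrite !Nat.eqb_refl; auto. Qed.

Definition mem (p : nat * nat) k := memlt (fst p) (snd p) k.

Lemma mem_In p k : mem p k = true <-> In p k.
Proof. destruct p. apply memlt_In. Qed.

Lemma mem_cons p x a : mem p (x :: a) = peq x p || mem p a.
Proof. reflexivity. Qed.

Lemma sum_single (f : nat * nat -> R) b x : NoDup b ->
  sumR (map (fun q => if peq x q then f q else 0) b) = if mem x b then f x else 0.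
Proof. induction b as [|y b IH]; intros nd; [reflexivity|]. rewrite map_cons, sumR_cons.
  inversion nd; subst. rewrite IH by auto. rewrite mem_cons.
  destruct (peq y x) eqn:E1; destruct (peq x y) eqn:E2; simpl.
  - apply peq_spec in E1; subst x. destruct (mem y b) eqn:E3; [|ring].
    apply mem_In in E3. contradiction.
  - apply peq_spec in E1; subst x. rewrite (proj2 (peq_spec y y) eq_refl) in E2; discriminate.
  - apply peq_spec in E2; subst x. rewrite (proj2 (peq_spec y y) eq_refl) in E1; discriminate.
  - ring. Qed.

Lemma sum_swap_nodup (f : nat * nat -> R) a b : NoDup a -> NoDup b ->
  sumR (map (fun p => if mem p b then f p else 0) a) =
  sumR (map (fun q => if mem q a then f q else 0) b).
Proof. revert b. induction a as [|x a IH]; intros b na nb.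
  - simpl. symmetry; apply sumR_zero; auto.
  - inversion na; subst. rewrite map_cons, sumR_cons, IH by auto.
    transitivity (sumR (map (fun q => (if peq x q then f q else 0) + (if mem q a then f q else 0)) b)).
    + rewrite sumR_plus, sum_single by auto. reflexivity.
    + apply sumR_ext. intros q Hq. rewrite mem_cons.
      destruct (peq x q) eqn:E; simpl; [|ring].
      apply peq_spec in E; subst x. destruct (mem _ a) eqn:E2; [|ring].
      apply mem_In in E2; contradiction.
Qed.

Lemma walk_links N s d ls : is_walk N s d ls -> forall l, In l ls -> (l < nL N)%nat.
Proof. revert s. induction ls as [|a ls IH]; simpl; intros s H l Hl; [contradiction|].
  destruct H as [h1 [h2 h3]]. destruct Hl as [<-|Hl]; auto. eapply IH; eauto. Qed.

Lemma valid_link N P m k l t : valid_sched N P m k -> In (l, t) k -> (l < nL N)%nat.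
Proof. intros [[hw _] _] Hi. eapply walk_links; eauto. apply in_map_iff. exists (l,t); auto. Qed.

Lemma times_nodup lo hi ts : times_ok lo hi ts -> (forall t, In t ts -> (lo <= t)%nat) /\ NoDup ts.
Proof. revert lo. induction ts as [|a ts IH]; simpl; intros lo H.
  - split; [tauto| constructor].
  - destruct H as [h1 h2]. destruct (IH _ h2) as [g1 g2]. split.
    + intros t [<-|Ht]; [lia|]. specialize (g1 t Ht). lia.
    + constructor; auto. intro Ha. specialize (g1 a Ha). lia. Qed.

Lemma valid_nodup N P m k : valid_sched N P m k -> NoDup k.
Proof. intros [_ ht]. apply times_nodup in ht as [_ nd]. eapply NoDup_map_inv; eauto. Qed.

Lemma counts_S dec j l t : counts dec (S j) l t =
  (counts dec j l t + match dec j with Some k => if memlt l t k then 1 else 0 | None => 0 end)%nat.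
Proof. simpl. unfold update. destruct (dec j); auto. Qed.

Lemma counts_mono dec j j' l t : (j <= j')%nat -> (counts dec j l t <= counts dec j' l t)%nat.
Proof. induction 1; auto. rewrite counts_S. lia. Qed.

Lemma Rinv_INR_nonneg c : 0 <= / INR c.
Proof. destruct c. simpl. rewrite Rinv_0. lra. left. apply Rinv_0_lt_compat. apply lt_0_INR. lia. Qed.

Lemma div_nonneg n c : 0 <= INR n / INR c.
Proof. unfold Rdiv. apply Rmult_le_pos. apply pos_INR. apply Rinv_INR_nonneg. Qed.

Section A.
Variable L : nat.
Hypothesis hL : (1 <= L)%nat.
Variable N : network.

Lemma beta_nonneg n l t : 0 <= beta_of L N n l t.
Proof. unfold beta_of. apply g_nonneg; auto. apply div_nonneg. Qed.

Lemma beta_mono (n1 n2 : nat -> nat -> nat) l t : (n1 l t <= n2 l t)%nat ->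
  beta_of L N n1 l t <= beta_of L N n2 l t.
Proof. intro h. unfold beta_of. apply g_mono; auto. unfold Rdiv. apply Rmult_le_compat_r.
  apply Rinv_INR_nonneg. apply le_INR; auto. Qed.

Lemma sum_beta_nonneg n k : 0 <= sum_beta (beta_of L N n) k.
Proof. apply sumR_nonneg. intros; apply beta_nonneg. Qed.

Lemma sum_beta_mono (n1 n2 : nat -> nat -> nat) k : (forall l t, n1 l t <= n2 l t)%nat ->
  sum_beta (beta_of L N n1) k <= sum_beta (beta_of L N n2) k.
Proof. intro h. apply sumR_le. intros; apply beta_mono; auto. Qed.

Lemma beta_zero l t : beta_of L N (fun _ _ => O) l t = 0.
Proof. unfold beta_of. replace (INR 0 / INR (cap N l)) with 0 by (simpl; unfold Rdiv; ring).
  apply g0; auto. Qed.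

Lemma beta_le_sum n k l t : In (l, t) k -> beta_of L N n l t <= sum_beta (beta_of L N n) k.
Proof. intro Hi. unfold sum_beta.
  apply (sumR_elem (fun p => beta_of L N n (fst p) (snd p)) k (l, t)); auto.
  intros; apply beta_nonneg. Qed.
End A.

Section B.
Variable L : nat.
Hypothesis hL : (1 <= L)%nat.
Variable N : network.
Variable P : packets.
Variable dec : nat -> option sched.
Hypothesis hcap : forall l, (l < nL N)%nat -> (1 <= cap N l)%nat.
Hypothesis hrun : alg3_run L N P dec.

Lemma run_some j k : (j < nM P)%nat -> dec j = Some k ->
  valid_sched N P j k /\
  (forall k', valid_sched N P j k' -> 1 - sum_beta (beta_of L N (counts dec j)) k' <= 1 - sum_beta (beta_of L N (counts dec j)) k) /\
  0 < 1 - sum_beta (beta_of L N (counts dec j)) k.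
Proof. intros hj hd. pose proof (hrun j hj) as H. cbv zeta in H. rewrite hd in H. exact H. Qed.

Lemma run_none j : (j < nM P)%nat -> dec j = None ->
  forall k', valid_sched N P j k' -> 1 - sum_beta (beta_of L N (counts dec j)) k' <= 0.
Proof. intros hj hd. pose proof (hrun j hj) as H. cbv zeta in H. rewrite hd in H. exact H. Qed.

Lemma cap_inv j : (j <= nM P)%nat -> forall l t, (l < nL N)%nat -> (counts dec j l t <= cap N l)%nat.
Proof. induction j; intros hj l t hl. simpl; lia.
  rewrite counts_S. specialize (IHj ltac:(lia) l t hl).
  destruct (dec j) as [k|] eqn:Ed; [|lia].
  destruct (memlt l t k) eqn:Em; [|lia].
  destruct (run_some j k ltac:(lia) Ed) as [hv [_ hpos]].
  apply memlt_In in Em.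
  pose proof (beta_le_sum L hL N (counts dec j) k l t Em).
  destruct (le_lt_dec (cap N l) (counts dec j l t)) as [h|h]; [|lia].
  exfalso. unfold beta_of in H.
  assert (1 <= INR (counts dec j l t) / INR (cap N l)).
  { specialize (hcap l hl). assert (1 <= INR (cap N l)) by (apply (le_INR 1); auto).
    apply le_INR in h. apply Rmult_le_reg_r with (INR (cap N l)). lra. field_simplify; lra. }
  pose proof (g_ge1 L hL _ H0). unfold beta_of in hpos. lra.
Qed.

Lemma Xchar j e : In e (alg_X_upto dec j) ->
  exists m k, (m < j)%nat /\ dec m = Some k /\ e = ((m, k), 1).
Proof. induction j; simpl; intros H; [contradiction|].
  apply in_app_or in H as [H|H].
  - destruct (IHj H) as [m [k [h1 [h2 h3]]]]. exists m, k; repeat split; auto; lia.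
  - destruct (dec j) as [k|] eqn:Ed; [|contradiction]. destruct H as [<-|[]].
    exists j, k; repeat split; auto. Qed.

Lemma X_nodup j : NoDup (map fst (alg_X_upto dec j)).
Proof. induction j; simpl; [constructor|]. rewrite map_app. apply NoDup_app; auto.
  - destruct (dec j); simpl; repeat constructor; auto.
  - intros a Ha Hb. apply in_map_iff in Ha as [e [He Hi]]. apply Xchar in Hi as [m [k [h1 [h2 h3]]]].
    subst. destruct (dec j); simpl in Hb; [|contradiction]. destruct Hb as [Hb|[]].
    inversion Hb; lia. Qed.

Lemma X_perm j m : sumR (map snd (filter (fun e => Nat.eqb (fst (fst e)) m) (alg_X_upto dec j)))
  <= if Nat.ltb m j then 1 else 0.
Proof. induction j; simpl; [lra|]. rewrite filter_app, map_app, sumR_app.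
  assert (E : sumR (map snd (filter (fun e => Nat.eqb (fst (fst e)) m)
      match dec j with Some k => [(j, k, 1)] | None => [] end)) <= if Nat.eqb j m then 1 else 0).
  { destruct (dec j); simpl; destruct (Nat.eqb j m); simpl; lra. }
  destruct (Nat.ltb_spec m j); destruct (Nat.ltb_spec m (S j)); destruct (Nat.eqb_spec j m); try lia; lra.
Qed.

Lemma X_cap j l t : sumR (map snd (filter (fun e => memlt l t (snd (fst e))) (alg_X_upto dec j)))
  = INR (counts dec j l t).
Proof. induction j; [reflexivity|]. cbn [alg_X_upto]. rewrite filter_app, map_app, sumR_app, IHj.
  rewrite counts_S, plus_INR. destruct (dec j); simpl; [|ring]. destruct (memlt l t s); simpl; ring. Qed.

Lemma X_obj j : objective (alg_X_upto dec j) =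
  sumR (map (fun i => match dec i with Some _ => 1 | None => 0 end) (seq 0 j)).
Proof. induction j; [reflexivity|]. unfold objective in *. simpl alg_X_upto.
  rewrite seq_S, !map_app, !sumR_app, IHj. simpl. destruct (dec j); simpl; ring. Qed.

Theorem part1 : schedule_feasible N P 1 (alg_X P dec).
Proof. unfold alg_X. split; [apply X_nodup|]. split; [|split].
  - intros e He. apply Xchar in He as [m [k [h1 [h2 ->]]]]. simpl.
    destruct (run_some m k h1 h2) as [hv _]. split; [exact h1|split; [exact hv|lra]].
  - intros m hm. eapply Rle_trans. apply X_perm. destruct (Nat.ltb m (nM P)); lra.
  - intros l t hl. rewrite X_cap. rewrite Rmult_1_l. apply le_INR. apply cap_inv; auto.
Qed.

Theorem part2 : dual_feasible N P (alg_alpha L N dec) (alg_beta L N P dec).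
Proof. split; [|split].
  - intros m k hm hv. unfold alg_alpha, alg_beta.
    assert (sum_beta (beta_of L N (counts dec m)) k <= sum_beta (beta_of L N (counts dec (nM P))) k)
      by (apply sum_beta_mono; auto; intros; apply counts_mono; lia).
    destruct (dec m) as [k0|] eqn:Ed.
    + destruct (run_some m k0 hm Ed) as [_ [hb _]]. specialize (hb k hv). lra.
    + pose proof (run_none m hm Ed k hv). lra.
  - intros m hm. unfold alg_alpha. destruct (dec m) as [k0|] eqn:Ed; [|lra].
    destruct (run_some m k0 hm Ed) as [_ [_ hp]]. lra.
  - intros l t _. unfold alg_beta. apply Rle_ge, beta_nonneg; auto.
Qed.
End B.

Lemma fold_min_le (f : nat -> nat) a s x : In x s -> (fold_right Nat.min a (map f s) <= f x)%nat.
Proof. induction s; simpl; intros H; [contradiction|]. destruct H as [<-|H]; [lia|].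
  specialize (IHs H). lia. Qed.

Lemma fold_min_ge (f : nat -> nat) a s b : (b <= a)%nat -> (forall x, In x s -> (b <= f x)%nat) ->
  (b <= fold_right Nat.min a (map f s))%nat.
Proof. induction s; simpl; intros H1 H2; auto. specialize (IHs H1 (fun x h => H2 x (or_intror h))).
  specialize (H2 a0 (or_introl eq_refl)). lia. Qed.

Section C.
Variable L : nat.
Hypothesis hL : (1 <= L)%nat.
Variable N : network.
Variable P : packets.
Variable dec : nat -> option sched.
Hypothesis hnL : (0 < nL N)%nat.
Hypothesis hcap : forall l, (l < nL N)%nat -> (1 <= cap N l)%nat.
Hypothesis hlen : forall m k, (m < nM P)%nat -> valid_sched N P m k -> (length k <= L)%nat.
Hypothesis hrun : alg3_run L N P dec.

Lemma Cmin_le l : (l < nL N)%nat -> (Cmin N <= cap N l)%nat.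
Proof. intro h. unfold Cmin. apply fold_min_le. apply in_seq. lia. Qed.

Lemma Cmin_ge1 : (1 <= Cmin N)%nat.
Proof. unfold Cmin. apply fold_min_ge. apply hcap; auto. intros x Hx. apply in_seq in Hx. apply hcap; lia. Qed.

Definition bj j := beta_of L N (counts dec j).
Definition delta j (p : nat * nat) := bj (S j) (fst p) (snd p) - bj j (fst p) (snd p).

Lemma telescope n l t : bj n l t = sumR (map (fun j => delta j (l, t)) (seq 0 n)).
Proof. induction n.
  - simpl. unfold bj. apply beta_zero; auto.
  - rewrite seq_S, map_app, sumR_app, <- IHn. simpl. unfold delta. simpl. ring. Qed.

Lemma delta_nonneg j p : 0 <= delta j p.
Proof. unfold delta, bj. assert (beta_of L N (counts dec j) (fst p) (snd p) <= beta_of L N (counts dec (S j)) (fst p) (snd p)).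
  apply beta_mono; auto. apply counts_mono; lia. lra. Qed.

Lemma delta_none j p : dec j = None -> delta j p = 0.
Proof. intro E. unfold delta, bj, beta_of. rewrite counts_S, E, Nat.add_0_r. ring. Qed.

Lemma delta_notmem j k p : dec j = Some k -> mem p k = false -> delta j p = 0.
Proof. intros E M. unfold delta, bj, beta_of. rewrite counts_S, E. unfold mem in M. rewrite M, Nat.add_0_r. ring. Qed.

Definition FF := KK L + EE L / INR (Cmin N).

Lemma FF_ge1 : 1 <= FF.
Proof. unfold FF, EE. pose proof (K_ge1 L hL). pose proof Cmin_ge1.
  assert (0 <= KK L ^ 2 * exp (KK L) / INR (Cmin N)).
  { unfold Rdiv. apply Rmult_le_pos. apply Rmult_le_pos. apply pow_le; lra. left; apply exp_pos. apply Rinv_INR_nonneg. }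
  lra. Qed.

Lemma perpacket j kj : (j < nM P)%nat -> dec j = Some kj ->
  alg_alpha L N dec j + sumR (map (fun q => INR (cap N (fst q)) * delta j q) kj) <= 2 * FF.
Proof. intros hj Ed. destruct (run_some L N P dec hrun j kj hj Ed) as [hv [_ hpos]].
  set (s := sum_beta (beta_of L N (counts dec j)) kj) in *.
  assert (s0 : 0 <= s) by (apply sum_beta_nonneg; auto).
  assert (ha : alg_alpha L N dec j = 1 - s) by (unfold alg_alpha; rewrite Ed; reflexivity).
  set (c := AA L / KK L).
  assert (c0 : 0 <= c). { unfold c, Rdiv. pose proof (A_pos L hL). pose proof (K_ge1 L hL).
     apply Rmult_le_pos; [lra|left; apply Rinv_0_lt_compat; lra]. }
  pose proof FF_ge1.
  assert (H1 : sumR (map (fun q => INR (cap N (fst q)) * delta j q) kj) <=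
          sumR (map (fun q => FF * beta_of L N (counts dec j) (fst q) (snd q) + FF * c) kj)).
  { apply sumR_le. intros [l t] Hq. simpl.
    assert (hl : (l < nL N)%nat) by (eapply valid_link; eauto).
    unfold delta, bj, beta_of. cbn [fst snd]. rewrite counts_S, Ed.
    assert (Em : memlt l t kj = true) by (apply memlt_In; auto). rewrite Em, Nat.add_1_r.
    pose proof (delta_bound L hL (counts dec j l t) (cap N l) (Cmin N) Cmin_ge1 (Cmin_le l hl)).
    fold FF in H0. fold c in H0. lra. }
  rewrite sumR_plus, sumR_scal in H1. fold (sum_beta (beta_of L N (counts dec j)) kj) in H1. fold s in H1.
  assert (H2 : sumR (map (fun _ : nat * nat => FF * c) kj) <= INR (length kj) * (FF * c))
    by (apply sumR_const_bound; intros; lra).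
  assert (H3 : INR (length kj) <= INR L) by (apply le_INR; eapply hlen; eauto).
  pose proof (LA_le1 L hL) as H4. fold c in H4.
  assert (INR (length kj) * (FF * c) <= FF) by (assert (INR (length kj) * c <= INR L * c) by (apply Rmult_le_compat_r; lra); assert (FF * (INR (length kj) * c) <= FF * 1) by (apply Rmult_le_compat_l; lra); nra).
  rewrite ha. nra.
Qed.

Lemma T1 (X : lpsol) : schedule_feasible N P 1 X ->
  sumR (map (fun e => snd e * alg_alpha L N dec (fst (fst e))) X)
  <= sumR (map (fun j => alg_alpha L N dec j) (seq 0 (nM P))).
Proof. intros [_ [hE [hM _]]].
  destruct (part2 L hL N P dec hrun) as [_ [ha _]].
  rewrite (sumR_ext _ (fun e => sumR (map (fun j => if Nat.eqb (fst (fst e)) j then snd e * alg_alpha L N dec j else 0) (seq 0 (nM P))))).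
  2:{ intros e He. rewrite sumR_ind_seq; auto. destruct (hE e He) as [h _]. lia. }
  rewrite sumR_swap. apply sumR_le. intros j Hj. apply in_seq in Hj.
  rewrite (sumR_ext _ (fun e => alg_alpha L N dec j * (if Nat.eqb (fst (fst e)) j then snd e else 0))).
  2:{ intros e _. destruct (Nat.eqb (fst (fst e)) j); ring. }
  rewrite sumR_scal, <- sumR_filter. specialize (hM j ltac:(lia)). specialize (ha j ltac:(lia)).
  assert (alg_alpha L N dec j * sumR (map snd (filter (fun e => (fst (fst e) =? j)%nat) X)) <= alg_alpha L N dec j * 1)
    by (apply Rmult_le_compat_l; lra). lra.
Qed.

Definition Dj j := match dec j with Some kj => sumR (map (fun q => INR (cap N (fst q)) * delta j q) kj) | None => 0 end.

Lemma T2 (X : lpsol) : schedule_feasible N P 1 X ->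
  sumR (map (fun e => snd e * sum_beta (alg_beta L N P dec) (snd (fst e))) X)
  <= sumR (map Dj (seq 0 (nM P))).
Proof. intros [_ [hE [_ hC]]].
  rewrite (sumR_ext _ (fun e => sumR (map (fun j => snd e * sumR (map (delta j) (snd (fst e)))) (seq 0 (nM P))))).
  2:{ intros e He. rewrite sumR_scal. f_equal. unfold sum_beta, alg_beta.
      rewrite (sumR_ext _ (fun p => sumR (map (fun j => delta j p) (seq 0 (nM P))))).
      2:{ intros [l t] _. cbn [fst snd]. fold (bj (nM P)). apply telescope; auto. }
      apply sumR_swap. }
  rewrite sumR_swap. apply sumR_le. intros j Hj. apply in_seq in Hj. unfold Dj.
  destruct (dec j) as [kj|] eqn:Ed.
  2:{ rewrite sumR_zero. lra. intros e _. rewrite sumR_zero. ring. intros; apply delta_none; auto. }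
  destruct (run_some L N P dec hrun j kj ltac:(lia) Ed) as [hv _].
  pose proof (valid_nodup _ _ _ _ hv) as ndj.
  rewrite (sumR_ext _ (fun e => sumR (map (fun q => if mem q (snd (fst e)) then snd e * delta j q else 0) kj))).
  2:{ intros e He. destruct (hE e He) as [_ [hve _]]. pose proof (valid_nodup _ _ _ _ hve) as nde.
      rewrite (sumR_ext (delta j) (fun p => if mem p kj then delta j p else 0)).
      2:{ intros p _. destruct (mem p kj) eqn:M; auto. apply delta_notmem with kj; auto. }
      rewrite sum_swap_nodup by auto. rewrite <- sumR_scal. apply sumR_ext. intros q _.
      unfold sched in *. destruct (mem q (snd (fst e))); ring. }
  rewrite sumR_swap. apply sumR_le. intros [l t] Hq.
  assert (hl : (l < nL N)%nat) by (eapply valid_link; eauto).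
  rewrite (sumR_ext _ (fun e => (if memlt l t (snd (fst e)) then snd e else 0) * delta j (l, t))).
  2:{ intros e _. unfold mem. cbn [fst snd]. destruct (memlt l t (snd (fst e))); ring. }
  rewrite sumR_scalr, <- sumR_filter. specialize (hC l t hl).
  pose proof (delta_nonneg j (l, t)). cbn [fst snd].
  apply Rmult_le_compat_r; lra.
Qed.

Lemma mainineq (X : lpsol) : schedule_feasible N P 1 X ->
  objective X <= 2 * FF * objective (alg_X P dec).
Proof. intro hX. pose proof hX as [_ [hE _]].
  destruct (part2 L hL N P dec hrun) as [hd _].
  assert (S1 : objective X <= sumR (map (fun e => snd e * alg_alpha L N dec (fst (fst e))) X)
       + sumR (map (fun e => snd e * sum_beta (alg_beta L N P dec) (snd (fst e))) X)).
  { unfold objective. rewrite <- sumR_plus. apply sumR_le. intros e He.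
    destruct (hE e He) as [hm [hv hx]]. specialize (hd _ _ hm hv).
    assert (snd e * 1 <= snd e * (alg_alpha L N dec (fst (fst e)) + sum_beta (alg_beta L N P dec) (snd (fst e))))
      by (apply Rmult_le_compat_l; lra). lra. }
  pose proof (T1 X hX). pose proof (T2 X hX).
  assert (S2 : sumR (map (fun j => alg_alpha L N dec j) (seq 0 (nM P))) + sumR (map Dj (seq 0 (nM P)))
    <= sumR (map (fun j => 2 * FF * match dec j with Some _ => 1 | None => 0 end) (seq 0 (nM P)))).
  { rewrite <- sumR_plus. apply sumR_le. intros j Hj. apply in_seq in Hj. unfold Dj.
    destruct (dec j) as [kj|] eqn:Ed.
    - rewrite Rmult_1_r. apply perpacket; auto. lia.
    - unfold alg_alpha. rewrite Ed. lra. }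
  rewrite sumR_scal in S2. unfold alg_X. rewrite X_obj. lra.
Qed.
End C.

Theorem theorem3 :
  forall L : nat, (1 <= L)%nat ->
  exists B : R,
  forall (N : network) (P : packets) (dec : nat -> option sched),
    (0 < nL N)%nat ->
    (forall l, (l < nL N)%nat -> (1 <= cap N l)%nat) ->
    (forall m, (m < nM P)%nat -> (1 <= arr P m)%nat) ->
    (forall m1 m2, (m1 <= m2)%nat -> (m2 < nM P)%nat -> (arr P m1 <= arr P m2)%nat) ->
    (forall m k, (m < nM P)%nat -> valid_sched N P m k -> (length k <= L)%nat) ->
    alg3_run L N P dec ->
    schedule_feasible N P 1 (alg_X P dec) /\
    dual_feasible N P (alg_alpha L N dec) (alg_beta L N P dec) /\
    (forall X : lpsol, schedule_feasible N P 1 X ->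
       objective X <= (2 * (1 + ln (INR L)) + B / INR (Cmin N)) * objective (alg_X P dec)).
Proof.
  intros L hL. exists (2 * EE L). intros N P dec hnL hcap _ _ hlen hrun.
  split. apply (part1 L hL); auto. split. apply (part2 L hL); auto.
  intros X hX. replace (2 * (1 + ln (INR L)) + 2 * EE L / INR (Cmin N)) with (2 * FF L N)
    by (unfold FF, KK, Rdiv; ring).
  eapply mainineq; eauto.
Qed.
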